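(* Let $\Lambda\in\mathcal H$ be of integral type and let $\tilde\Lambda\in\mathcal H$ be of $\Lambda$-integral type, with associated left coideal subalgebra $\mathcal A_{\tilde\Lambda}$ and homomorphism $\pi:\mathcal A_{\tilde\Lambda}\to\mathcal H$. Then for every $a\in\mathcal A_{\tilde\Lambda}$, $$(1\otimes a)\Delta(\tilde\Lambda)=(S(\pi(a))\otimes 1)\Delta(\tilde\Lambda).$$ Moreover: (1) $\mathcal V_{\tilde\Lambda}\subset\mathcal A_{\tilde\Lambda}$, and $\mathcal V_{\tilde\Lambda}$ is a left ideal of $\mathcal A_{\tilde\Lambda}$ which is faithful as a left $\mathcal A_{\tilde\Lambda}$-module (i.e. if $a\in\mathcal A_{\tilde\Lambda}$ and $av=0$ for all $v\in\mathcal V_{\tilde\Lambda}$ then $a=0$); (2) $\dim\mathcal A_{\tilde\Lambda}<\infty$; (3) ${}_{\tilde\Lambda}\mathcal V$ is a right $\mathcal A_{\tilde\Lambda}$-module via $x\cdot a:=S(\pi(a))x$ for $a\in\mathcal A_{\tilde\Lambda}$, $x\in{}_{\tilde\Lambda}\mathcal V$; (4) the linear map $U:\mathcal V_{\tilde\Lambda}'\to{}_{\tilde\Lambda}\mathcal V$, $U(\nu)=(\mathrm{id}\otimes\nu)(\Delta(\tilde\Lambda))$, is an isomorphism of right $\mathcal A_{\tilde\Lambda}$-modules, where $\mathcal V_{\tilde\Lambda}'$ carries the right module structure $(\nu\cdot a)(v)=\nu(av)$; (5) $\tilde\Lambda$ is non-degenerate if and only if $\mathcal V_{\tilde\Lambda}=\mathcal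 A_{\tilde\Lambda}$.
   Context: $k$ is a field; $\mathcal H$ is a Hopf algebra over $k$ with comultiplication $\Delta$, counit $\varepsilon$, invertible antipode $S$, and $\mathcal H'$ denotes its linear dual. A left coideal is a subspace $V\subset\mathcal H$ with $\Delta(V)\subset\mathcal H\otimes V$; a left coideal subalgebra is a subalgebra containing $1$ which is a left coideal. For $\Lambda\in\mathcal H$ put $\mathcal V_\Lambda=\{(\nu\otimes\mathrm{id})\Delta(\Lambda):\nu\in\mathcal H'\}$ and ${}_\Lambda\mathcal V=\{(\mathrm{id}\otimes\nu)\Delta(\Lambda):\nu\in\mathcal H'\}$. A non-zero $\Lambda\in\mathcal H$ is of integral type if $\Delta(\Lambda)(1\otimes\Lambda)=\Lambda\otimes\Lambda$. For $\Lambda$ of integral type, a non-zero $\tilde\Lambda\in\mathcal H$ is of $\Lambda$-integral type if $\Delta(\tilde\Lambda)(1\otimes\tilde\Lambda)=\Lambda\otimes\tilde\Lambda$; it is called non-degenerate if $1\in\mathcal V_{\tilde\Lambda}$. For such $\tilde\Lambda$, $\mathcal A_{\tilde\Lambda}=\{a\in\mathcal H:\ \Delta(a)(1\otimes\tilde\Lambda)=b\otimes\tilde\Lambda\text{ for some }b\in\mathcal H\}$; this is a left coideal subalgebra, the element $b$ is uniquely determined by $a$ and denoted $\pi(a)$, and $\pi:\mathcal A_{\tilde\Lambda}\to\mathcal H$ is an injective algebra homomorphism. *)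

(* Defs.v *)
(* A Hopf algebra over a field k with invertible antipode,
   tensors in H (x) H represented as finite formal sums (seq (H * H)). *)
From HB Require Import structures.
From mathcomp Require Import all_boot all_order all_algebra.
From Stdlib Require Import ClassicalEpsilon.
Set Implicit Arguments. Unset Strict Implicit. Unset Printing Implicit Defensive.
Import GRing.Theory.
Local Open Scope ring_scope.

Section Hopf.
Variables (k : fieldType) (H : algType k).

Definition lfun (f : H -> k) : Prop :=
  forall (c : k) (x y : H), f (c *: x + y) = c * f x + f y.

(* (nu (x) id) t  and  (id (x) nu) t  for a formal sum t = sum p.1 (x) p.2 *)
Definition slice_l (f : H -> k) (t : seq (H * H)) : H := \sum_(p <- t) f p.1 *: p.2.
Definition slice_r (f : H -> k) (t : seq (H * H)) : H := \sum_(p <- t) f p.2 *: p.1.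

(* equality in H (x) H (over a field, left slices by all functionals separate tensors) *)
Definition teq2 (t t' : seq (H * H)) : Prop :=
  forall f, lfun f -> slice_l f t = slice_l f t'.

Definition teq3 (t t' : seq (H * H * H)) : Prop :=
  forall f g, lfun f -> lfun g ->
    \sum_(p <- t) (f p.1.1 * g p.1.2) *: p.2 = \sum_(p <- t') (f p.1.1 * g p.1.2) *: p.2.

Definition tmul2 (t t' : seq (H * H)) : seq (H * H) :=
  [seq (p.1 * q.1, p.2 * q.2) | p <- t, q <- t'].
Definition tscale (c : k) (t : seq (H * H)) : seq (H * H) :=
  [seq (c *: p.1, p.2) | p <- t].

Record is_hopf (D : H -> seq (H * H)) (e : H -> k) (S : H -> H) : Prop := {
  cop_lin : forall c x y, teq2 (D (c *: x + y)) (tscale c (D x) ++ D y);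
  cop_mul : forall x y, teq2 (D (x * y)) (tmul2 (D x) (D y));
  cop_one : teq2 (D 1) [:: (1, 1)];
  coassoc : forall x,
    teq3 [seq ((q.1, q.2), p.2) | p <- D x, q <- D p.1]
         [seq ((p.1, q.1), q.2) | p <- D x, q <- D p.2];
  eps_lin : lfun e;
  eps_mul : forall x y, e (x * y) = e x * e y;
  eps_one : e 1 = 1;
  counit_l : forall x, \sum_(p <- D x) e p.1 *: p.2 = x;
  counit_r : forall x, \sum_(p <- D x) e p.2 *: p.1 = x;
  ant_lin : forall c x y, S (c *: x + y) = c *: S x + S y;
  ant_l : forall x, \sum_(p <- D x) S p.1 * p.2 = e x *: 1;
  ant_r : forall x, \sum_(p <- D x) p.1 * S p.2 = e x *: 1;
  ant_bij : bijective S }.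

Variable D : H -> seq (H * H).

Definition integral_type (L : H) : Prop :=
  L != 0 /\ teq2 (tmul2 (D L) [:: (1, L)]) [:: (L, L)].

Definition L_integral_type (L Lt : H) : Prop :=
  Lt != 0 /\ teq2 (tmul2 (D Lt) [:: (1, Lt)]) [:: (L, Lt)].

Definition Vl (Lt : H) (x : H) : Prop := exists nu, lfun nu /\ x = slice_l nu (D Lt).
Definition Vr (Lt : H) (x : H) : Prop := exists nu, lfun nu /\ x = slice_r nu (D Lt).

Definition nondegenerate_int (Lt : H) : Prop := Vl Lt 1.

Definition pi_rel (Lt a b : H) : Prop := teq2 (tmul2 (D a) [:: (1, Lt)]) [:: (b, Lt)].

Definition Acoid (Lt : H) (a : H) : Prop := exists b, pi_rel Lt a b.

Definition piA (Lt : H) (a : H) : H := epsilon (inhabits 0) (pi_rel Lt a).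

Definition Uslice (Lt : H) (nu : H -> k) : H := slice_r nu (D Lt).

End Hopf.

Definition fin_dim (k : fieldType) (V : lmodType k) (P : V -> Prop) : Prop :=
  exists s : seq V, forall x, P x ->
    exists c : 'I_(size s) -> k, x = \sum_(i < size s) c i *: s`_i.

(* Main.v *)
From HB Require Import structures.
From mathcomp Require Import all_boot all_order all_algebra.
From mathcomp Require Import classical_sets.
From Stdlib Require Import ClassicalEpsilon Classical.
Require Import Defs.
Import GRing.Theory.
Local Open Scope ring_scope.
Set Implicit Arguments. Unset Strict Implicit. Unset Printing Implicit Defensive.

Section Sep.
Variables (k : fieldType) (H : lmodType k).

Definition clos (M : H -> Prop) := (forall a b, M a -> M b -> M (a + b)) /\ (forall (c : k) a, M a -> M (c *: a)).

Lemma sep_fun (x : H) : x != 0 -> exists f : H -> k,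
  (forall (c : k) (y z : H), f (c *: y + z) = c * f y + f z) /\ f x = 1.
Proof.
move=> xn0.
pose P : set (set H) := fun M => clos M /\ ~ M x.
have [A [[[AD AZ] Ax] Amax]] : exists A : set H, P A /\ (forall B, (A `<` B)%classic -> ~ P B).
  apply: Zorn_bigcup => F FP Ftot; split; [split|].
  - move=> a b [X FX Xa] [Y FY Yb].
    have [XY|YX] := Ftot _ _ FX FY.
    + exists Y => //; apply: (proj1 (proj1 (FP _ FY))) => //; exact: XY.
    + exists X => //; apply: (proj1 (proj1 (FP _ FX))) => //; exact: YX.
  - move=> c a [X FX Xa]; exists X => //; exact: (proj2 (proj1 (FP _ FX))).
  - by move=> [X FX Xx]; exact: (proj2 (FP _ FX)).
pose A0 z := A z \/ z = 0.
have A0D a b : A0 a -> A0 b -> A0 (a + b).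
  by case=> [Aa|->]; case=> [Ab|->]; rewrite ?addr0 ?add0r; [left; apply: AD| left| left|right].
have A0Z c a : A0 a -> A0 (c *: a).
  by case=> [Aa|->]; [left; apply: AZ|right; rewrite scaler0].
have A0x : ~ A0 x by case=> // /eqP; rewrite (negbTE xn0).
have ex y : exists c : k, A0 (y - c *: x).
  pose B z := exists m (c : k), A0 m /\ z = m + c *: y.
  have [Bx|nBx] := classic (B x).
    case: Bx => m [c [A0m xE]].
    have [c0|cn0] := eqVneq c 0.
      by exfalso; apply: A0x; rewrite xE c0 scale0r addr0.
    exists c^-1; have -> : y - c^-1 *: x = (- c^-1) *: m.
      by rewrite xE scalerDr scalerA mulVf // scale1r opprD addrCA subrr addr0 scaleNr.
    exact: A0Z.
  have PB : P B.
    split=> //; split.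
    - move=> _ _ [m [c [Am ->]]] [m' [c' [Am' ->]]]; exists (m + m'), (c + c'); split; first exact: A0D.
      by rewrite scalerDl addrACA.
    - move=> d _ [m [c [Am ->]]]; exists (d *: m), (d * c); split; first exact: A0Z.
      by rewrite scalerDr scalerA.
  have AB : (A `<=` B)%classic by move=> z Az; exists z, 0; split; [by left|by rewrite scale0r addr0].
  have BA : (B `<=` A)%classic.
    apply: NNPP => nBA; exact: (Amax B (conj AB nBA)).
  exists 0; rewrite scale0r subr0; left; apply: BA; exists 0, 1; split; [by right|by rewrite add0r scale1r].
have uniq y c c' : A0 (y - c *: x) -> A0 (y - c' *: x) -> c = c'.
  move=> h h'; apply: NNPP => ne.
  have : A0 ((c' - c) *: x).
    have -> : (c' - c) *: x = (y - c *: x) + (-1) *: (y - c' *: x).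
      by rewrite scaleN1r opprB scalerBl [in RHS]addrC addrA subrK.
    exact: A0D h (A0Z _ _ h').
  move/(A0Z (c' - c)^-1); rewrite scalerA mulVf ?scale1r //.
  by rewrite subr_eq0; apply/eqP => e; apply: ne.
pose f y := proj1_sig (constructive_indefinite_description _ (ex y)).
have fP y : A0 (y - f y *: x) by rewrite /f; case: constructive_indefinite_description.
exists f; split.
  move=> c y z; apply: uniq (fP _) _.
  have -> : c *: y + z - (c * f y + f z) *: x = c *: (y - f y *: x) + (z - f z *: x).
    by rewrite scalerDl scalerBr scalerA opprD addrACA.
  by apply: A0D; [apply: A0Z|].
by apply: uniq (fP x) _; rewrite scale1r subrr; right.
Qed.
End Sep.

Section Infra.
Variables (k : fieldType) (H : algType k).
Implicit Types (f : H -> k) (F : H -> H).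

Definition lin (F : H -> H) := forall (c : k) x y, F (c *: x + y) = c *: F x + F y.

Lemma lfun0 {f} : lfun f -> f 0 = 0.
Proof. move=> hf; have h := hf 1 0 0; rewrite scaler0 addr0 mul1r in h.
by apply: (addrI (f 0)); rewrite addr0 -h. Qed.
Lemma lfunD {f} : lfun f -> forall x y, f (x + y) = f x + f y.
Proof. by move=> hf x y; rewrite -[x]scale1r hf mul1r scale1r. Qed.
Lemma lfunZ {f} : lfun f -> forall c x, f (c *: x) = c * f x.
Proof. by move=> hf c x; rewrite -[c *: x]addr0 hf lfun0 // addr0. Qed.
Lemma lfunN {f} : lfun f -> forall x, f (- x) = - f x.
Proof. by move=> hf x; rewrite -scaleN1r lfunZ // mulN1r. Qed.
Lemma lfunB {f} : lfun f -> forall x y, f (x - y) = f x - f y.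
Proof. by move=> hf x y; rewrite lfunD // lfunN. Qed.
Lemma lfun_sum {f} (hf : lfun f) (I : Type) (r : seq I) (P : pred I) (F : I -> H) :
  f (\sum_(i <- r | P i) F i) = \sum_(i <- r | P i) f (F i).
Proof. apply: (big_morph f (lfunD hf) (lfun0 hf)). Qed.

Lemma lin0 {F} : lin F -> F 0 = 0.
Proof. move=> hf; have h := hf 1 0 0; rewrite scaler0 addr0 scale1r in h.
by apply: (addrI (F 0)); rewrite addr0 -h. Qed.
Lemma linD {F} : lin F -> forall x y, F (x + y) = F x + F y.
Proof. by move=> hf x y; rewrite -[x]scale1r hf !scale1r. Qed.
Lemma linZ {F} : lin F -> forall c x, F (c *: x) = c *: F x.
Proof. by move=> hf c x; rewrite -[c *: x]addr0 hf lin0 // addr0. Qed.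
Lemma lin_sum {F} (hf : lin F) (I : Type) (r : seq I) (P : pred I) (G : I -> H) :
  F (\sum_(i <- r | P i) G i) = \sum_(i <- r | P i) F (G i).
Proof. apply: (big_morph F (linD hf) (lin0 hf)). Qed.

Lemma lfun_comp f F : lfun f -> lin F -> lfun (fun x => f (F x)).
Proof. by move=> hf hF c x y; rewrite hF hf. Qed.
Lemma lin_mull a : lin (fun y => a * y).
Proof. by move=> c x y; rewrite mulrDr scalerAr. Qed.
Lemma lin_mulr a : lin (fun y => y * a).
Proof. by move=> c x y; rewrite mulrDl scalerAl. Qed.
Lemma lin_scal f v : lfun f -> lin (fun y => f y *: v).
Proof. by move=> hf c x y; rewrite hf scalerDl scalerA. Qed.
Lemma lin_comp F G : lin F -> lin G -> lin (fun x => F (G x)).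
Proof. by move=> hF hG c x y; rewrite hG hF. Qed.
Lemma lin_id : lin (fun y : H => y). Proof. by []. Qed.
Lemma lin_sumf (I : Type) (r : seq I) (F : I -> H -> H) :
  (forall i, lin (F i)) -> lin (fun x => \sum_(i <- r) F i x).
Proof.
move=> hF c x y; rewrite scaler_sumr -big_split /=.
by apply: eq_bigr => i _; rewrite hF.
Qed.
Lemma lfun_scal_lin (f : H -> k) : lfun f -> forall (F : H -> H) x, lin F ->
   lin (fun y => f x *: F y).
Proof. by move=> hf F x hF c y z; rewrite hF scalerDr !scalerA mulrC. Qed.

Lemma lin_cscal (c : k) F : lin F -> lin (fun y => c *: F y).
Proof. by move=> hF d x y; rewrite hF scalerDr !scalerA mulrC. Qed.
Lemma lfun_mulr f (c : k) : lfun f -> lfun (fun x => f x * c).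
Proof. by move=> hf d x y; rewrite hf mulrDl mulrA. Qed.

Lemma sep_eq (x y : H) : (forall f, lfun f -> f x = f y) -> x = y.
Proof.
move=> h; apply/eqP; rewrite -subr_eq0; apply/negPn/negP => ne.
have [f [hf f1]] := @sep_fun k H _ ne.
have := h f hf; move/eqP; rewrite -subr_eq0 -(lfunB hf) f1 => /eqP.
by move/eqP; rewrite oner_eq0.
Qed.

Lemma sep_scal (x y v : H) : v != 0 -> (forall f, lfun f -> f x *: v = f y *: v) -> x = y.
Proof.
move=> vn0 h; apply: sep_eq => f hf; apply/eqP; rewrite -subr_eq0.
have := h f hf => /eqP; rewrite -subr_eq0 -scalerBl scaler_eq0 (negbTE vn0) orbF //.
Qed.

Fixpoint all_lfun (ds : seq ((H -> k) * H)) : Prop :=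
  if ds is d :: ds' then lfun d.1 /\ all_lfun ds' else True.

Lemma lin_sub F G : lin F -> lin G -> lin (fun x => F x - G x).
Proof. by move=> hF hG c x y; rewrite hF hG scalerBr opprD addrACA. Qed.

Lemma lin_decsum ds : all_lfun ds -> lin (fun y => \sum_(d <- ds) d.1 y *: d.2).
Proof.
elim: ds => [_|d ds IH [hd hds]] c x y; first by rewrite !big_nil scaler0 addr0.
rewrite !big_cons IH // (@lin_scal d.1 d.2 hd) scalerDr addrACA //.
Qed.

Lemma decomp (xs : seq H) : exists ds, all_lfun ds /\
  forall x, x \in xs -> x = \sum_(d <- ds) d.1 x *: d.2.
Proof.
elim: xs => [|x xs [ds [hds hx]]]; first by exists [::].
pose P y := y - \sum_(d <- ds) d.1 y *: d.2.
have linP : lin P by apply: lin_sub => //; apply: lin_decsum.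
have P0 z : z \in xs -> P z = 0 by move=> /hx e; rewrite /P -e subrr.
case: (eqVneq (P x) 0) => [Px0|Pxn0].
  exists ds; split => // z; rewrite inE => /orP [/eqP -> | /hx //].
  by move: Px0; rewrite /P => /eqP; rewrite subr_eq0 => /eqP.
have [f [hf f1]] := @sep_fun k H _ Pxn0.
exists ((fun y => f (P y), P x) :: ds); split; first by split=> //; apply: lfun_comp.
move=> z; rewrite inE big_cons /= => /orP [/eqP -> | zs].
  by rewrite f1 scale1r /P subrK.
by rewrite P0 // lfun0 // scale0r add0r; apply: hx.
Qed.

Lemma eq_sum_all ds (F G : _ -> H) : all_lfun ds ->
  (forall d, lfun d.1 -> F d = G d) -> \sum_(d <- ds) F d = \sum_(d <- ds) G d.
Proof.
elim: ds => [|d ds IH]; first by rewrite !big_nil.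
move=> [hd hds] h; by rewrite !big_cons h // IH.
Qed.

Definition bil (B : H -> H -> H) := (forall y, lin (fun x => B x y)) /\ (forall x, lin (B x)).

Lemma bil_decomp (B : H -> H -> H) ds (t : seq (H * H)) : bil B -> all_lfun ds ->
  (forall p, p \in t -> p.1 = \sum_(d <- ds) d.1 p.1 *: d.2) ->
  \sum_(p <- t) B p.1 p.2 = \sum_(d <- ds) B d.2 (slice_l d.1 t).
Proof.
move=> [hB1 hB2] hds ht.
transitivity (\sum_(p <- t) \sum_(d <- ds) B d.2 (d.1 p.1 *: p.2)).
  rewrite big_seq_cond [RHS]big_seq_cond; apply: eq_bigr => p /andP [pt _].
  rewrite {1}(ht p pt) (lin_sum (hB1 p.2)).
  elim: ds hds {ht} => [|d ds IH] hds; first by rewrite !big_nil.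
  case: hds => hd hds.
  by rewrite !big_cons IH // (linZ (hB1 _)) (linZ (hB2 _)).
rewrite exchange_big /=; apply: eq_bigr => d _.
by rewrite /slice_l (lin_sum (hB2 _)).
Qed.

Lemma teq2_bil (t t' : seq (H * H)) (B : H -> H -> H) : teq2 t t' -> bil B ->
  \sum_(p <- t) B p.1 p.2 = \sum_(p <- t') B p.1 p.2.
Proof.
move=> ht hB; have [ds [hds hx]] := decomp [seq p.1 | p <- t ++ t'].
rewrite (bil_decomp (t:=t) hB hds); last first.
  by move=> p pt; apply: hx; apply/mapP; exists p => //; rewrite mem_cat pt.
rewrite (bil_decomp (t:=t') hB hds); last first.
  by move=> p pt; apply: hx; apply/mapP; exists p => //; rewrite mem_cat pt orbT.
by apply: eq_sum_all => // d hd; congr (B _ _); apply: ht.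
Qed.
Lemma lin_sumZ {F} (hF : lin F) (I : Type) (r : seq I) (c : I -> k) (v : I -> H) :
  F (\sum_(i <- r) c i *: v i) = \sum_(i <- r) c i *: F (v i).
Proof. by rewrite (lin_sum hF); apply: eq_bigr => i _; rewrite (linZ hF). Qed.

Definition tril (C : H -> H -> H -> H) := (forall y z, lin (fun x => C x y z)) /\ (forall x z, lin (fun y => C x y z)) /\ (forall x y, lin (C x y)).

Lemma tri_decomp (C : H -> H -> H -> H) ds es (T : seq (H * H * H)) : tril C ->
  (forall p, p \in T -> p.1.1 = \sum_(d <- ds) d.1 p.1.1 *: d.2) ->
  (forall p, p \in T -> p.1.2 = \sum_(d <- es) d.1 p.1.2 *: d.2) ->
  \sum_(p <- T) C p.1.1 p.1.2 p.2 = \sum_(d <- ds) \sum_(e <- es)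
     C d.2 e.2 (\sum_(p <- T) (d.1 p.1.1 * e.1 p.1.2) *: p.2).
Proof.
move=> [h1 [h2 h3]] hd he.
transitivity (\sum_(p <- T) \sum_(d <- ds) \sum_(e <- es) C d.2 e.2 ((d.1 p.1.1 * e.1 p.1.2) *: p.2)).
  rewrite big_seq_cond [RHS]big_seq_cond; apply: eq_bigr => p /andP [pt _].
  rewrite {1}(hd p pt) {1}(he p pt) (lin_sumZ (h1 _ _)).
  apply: eq_bigr => d _; rewrite (lin_sumZ (h2 _ _)) scaler_sumr.
  by apply: eq_bigr => e _; rewrite (linZ (h3 _ _)) scalerA.
rewrite exchange_big /=; apply: eq_bigr => d _.
rewrite exchange_big /=; apply: eq_bigr => e _.
by rewrite (lin_sum (h3 _ _)).
Qed.

Lemma teq3_tril (T T' : seq (H * H * H)) (C : H -> H -> H -> H) : teq3 T T' -> tril C ->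
  \sum_(p <- T) C p.1.1 p.1.2 p.2 = \sum_(p <- T') C p.1.1 p.1.2 p.2.
Proof.
move=> hT hC.
have [ds [hds hx]] := decomp [seq p.1.1 | p <- T ++ T'].
have [es [hes hy]] := decomp [seq p.1.2 | p <- T ++ T'].
rewrite (tri_decomp (ds:=ds) (es:=es) (T:=T) hC); first last.
- by move=> p pt; apply: hy; apply/mapP; exists p => //; rewrite mem_cat pt.
- by move=> p pt; apply: hx; apply/mapP; exists p => //; rewrite mem_cat pt.
rewrite (tri_decomp (ds:=ds) (es:=es) (T:=T') hC); first last.
- by move=> p pt; apply: hy; apply/mapP; exists p => //; rewrite mem_cat pt orbT.
- by move=> p pt; apply: hx; apply/mapP; exists p => //; rewrite mem_cat pt orbT.
apply: eq_sum_all => // d hd; apply: eq_sum_all => // e he.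
by congr (C _ _ _); apply: hT.
Qed.
Fixpoint allz (ps : seq (H -> k)) (a : H) : Prop :=
  if ps is p :: ps' then p a = 0 /\ allz ps' a else True.
Fixpoint allf (ps : seq (H -> k)) : Prop :=
  if ps is p :: ps' then lfun p /\ allf ps' else True.

Lemma allf_cat s1 s2 : allf s1 -> allf s2 -> allf (s1 ++ s2).
Proof. by elim: s1 => //= p s1 IH [hp h1] h2; split=> //; apply: IH. Qed.
Lemma allz_cat s1 s2 a : allz (s1 ++ s2) a -> allz s1 a /\ allz s2 a.
Proof. by elim: s1 => //= p s1 IH [hp /IH [h1 h2]]. Qed.

Lemma findim_inj (ps : seq (H -> k)) (P : H -> Prop) : allf ps ->
  (forall c x y, P x -> P y -> P (c *: x + y)) ->
  (forall a, P a -> allz ps a -> a = 0) -> fin_dim P.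
Proof.
elim: ps P => [|p ps IH] P /=.
  move=> _ _ hinj; exists [::] => x Px; exists (fun _ => 0).
  by rewrite big_ord0; apply: hinj.
move=> [hp hps] hcl hinj.
have [[p0 [Pp0 pn0]]|nex] := classic (exists p0, P p0 /\ p p0 != 0); last first.
  apply: IH => // a Pa za; apply: hinj => //; split=> //.
  by apply: NNPP => ne; apply: nex; exists a; split=> //; apply/eqP.
have P0 : P 0 by have := hcl (-1) _ _ Pp0 Pp0; rewrite scaleN1r addNr.
pose p1 := (p p0)^-1 *: p0.
have Pp1 : P p1 by have := hcl (p p0)^-1 _ _ Pp0 P0; rewrite addr0.
have pp1 : p p1 = 1 by rewrite /p1 (lfunZ hp) mulVf.
pose P' a := P a /\ p a = 0.
have [s' hs'] : fin_dim P'.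
  apply: IH => //.
  - move=> c x y [Px px] [Py py]; split; first exact: hcl.
    by rewrite hp px py mulr0 addr0.
  - by move=> a [Pa pa] za; apply: hinj.
exists (p1 :: s') => x Px.
have [c hc] : exists c : 'I_(size s') -> k, x - p x *: p1 = \sum_(i < size s') c i *: s'`_i.
  apply: hs'; split.
    by rewrite addrC -scaleNr; apply: hcl.
  by rewrite (lfunB hp) (lfunZ hp) pp1 mulr1 subrr.
exists (fun i => if unlift ord0 i is Some j then c j else p x).
rewrite big_ord_recl /= unlift_none.
under eq_bigr do rewrite liftK.
by rewrite -hc addrC subrK.
Qed.
End Infra.
Arguments lin_id {k H}.

Section Hopf2.
Variables (k : fieldType) (H : algType k) (D : H -> seq (H * H)) (e : H -> k) (S : H -> H).
Hypothesis hh : is_hopf D e S.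
Implicit Types (f : H -> k) (F : H -> H).

Lemma lin_S : lin S.
Proof. exact: ant_lin hh. Qed.

Lemma bil_scal f F : lfun f -> lin F -> bil (fun x y => f x *: F y).
Proof. move=> hf hF; split=> [y|x]; [exact: lin_scal | exact: lfun_scal_lin]. Qed.

Lemma D_lin (G : H -> H -> H) : bil G -> lin (fun y => \sum_(q <- D y) G q.1 q.2).
Proof.
move=> hG c x y; rewrite (teq2_bil (cop_lin hh c x y) hG) big_cat /= /tscale big_map /=.
by rewrite scaler_sumr; congr (_ + _); apply: eq_bigr => p _; rewrite (linZ (hG.1 _)).
Qed.

Lemma sum_tmul1 (G : H -> H -> H) t a b :
  \sum_(p <- tmul2 t [:: (a, b)]) G p.1 p.2 = \sum_(p <- t) G (p.1 * a) (p.2 * b).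
Proof. by rewrite /tmul2 big_allpairs_dep; apply: eq_bigr => p _; rewrite big_seq1. Qed.

Lemma sum_tmul (G : H -> H -> H) t t' :
  \sum_(p <- tmul2 t t') G p.1 p.2 = \sum_(p <- t) \sum_(q <- t') G (p.1 * q.1) (p.2 * q.2).
Proof. by rewrite /tmul2 big_allpairs_dep. Qed.

Lemma coas (C : H -> H -> H -> H) x : tril C ->
  \sum_(p <- D x) \sum_(q <- D p.1) C q.1 q.2 p.2 = \sum_(p <- D x) \sum_(q <- D p.2) C p.1 q.1 q.2.
Proof.
move=> hC; have := teq3_tril (coassoc hh x) hC.
by rewrite !big_allpairs_dep.
Qed.

Variable Lt : H.
Hypothesis Ltn0 : Lt != 0.

Lemma PR a b (B : H -> H -> H) : pi_rel D Lt a b -> bil B ->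
  \sum_(p <- D a) B p.1 (p.2 * Lt) = B b Lt.
Proof.
move=> hab hB; have := teq2_bil hab hB; rewrite sum_tmul1 big_seq1 /= => <-.
by apply: eq_bigr => p _; rewrite mulr1.
Qed.

Lemma pi_relI a b : (forall f, lfun f -> \sum_(p <- D a) f p.1 *: (p.2 * Lt) = f b *: Lt) ->
  pi_rel D Lt a b.
Proof.
move=> h f hf; rewrite /slice_l (sum_tmul1 (fun x y => f x *: y)) big_seq1 /= -h //.
by apply: eq_bigr => p _; rewrite mulr1.
Qed.

Lemma pi_uniq a b b' : pi_rel D Lt a b -> pi_rel D Lt a b' -> b = b'.
Proof.
move=> h h'; apply: (sep_scal Ltn0) => f hf.
by rewrite -(PR h (bil_scal hf lin_id)) -(PR h' (bil_scal hf lin_id)).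
Qed.

Lemma piA_spec a : Acoid D Lt a -> pi_rel D Lt a (piA D Lt a).
Proof. by move=> h; rewrite /piA; apply: epsilon_spec. Qed.

Lemma piA_eq a b : pi_rel D Lt a b -> piA D Lt a = b.
Proof. by move=> h; apply: (pi_uniq (piA_spec _) h); exists b. Qed.

Lemma A_lin c a b a' b' : pi_rel D Lt a b -> pi_rel D Lt a' b' ->
  pi_rel D Lt (c *: a + a') (c *: b + b').
Proof.
move=> h h'; apply: pi_relI => f hf.
have hG := bil_scal hf (lin_mulr Lt).
have hB := bil_scal hf lin_id.
rewrite (D_lin hG) /= (PR h hB) (PR h' hB) hf scalerDl scalerA //.
Qed.

Lemma A_one : pi_rel D Lt 1 1.
Proof.
apply: pi_relI => f hf.
have hG := bil_scal hf (lin_mulr Lt).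
by rewrite (teq2_bil (cop_one hh) hG) big_seq1 /= mul1r.
Qed.

Lemma A_mul a b a' b' : pi_rel D Lt a b -> pi_rel D Lt a' b' ->
  pi_rel D Lt (a * a') (b * b').
Proof.
move=> h h'; apply: pi_relI => f hf.
have hG := bil_scal hf (lin_mulr Lt).
rewrite (teq2_bil (cop_mul hh a a') hG) (sum_tmul (fun x y => f x *: (y * Lt))) /=.
transitivity (\sum_(p <- D a) f (p.1 * b') *: (p.2 * Lt)).
  apply: eq_bigr => p _.
  have hG' := bil_scal (lfun_comp hf (lin_mull p.1)) lin_id.
  have /= e1 := PR h' hG'.
  rewrite scalerAr -e1 mulr_sumr; apply: eq_bigr => q _.
  by rewrite -scalerAr mulrA.
exact: (PR h (bil_scal (lfun_comp hf (lin_mulr b')) lin_id)).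
Qed.


Lemma main_id a b f : pi_rel D Lt a b -> lfun f ->
  \sum_(p <- D Lt) f p.1 *: (a * p.2) = \sum_(p <- D Lt) f (S b * p.1) *: p.2.
Proof.
move=> hab hf.
pose Bf x y := \sum_(q <- D y) f (S x * q.1) *: q.2.
have hBf : bil Bf.
  split=> [y|x].
    by apply: lin_sumf => q; apply: lin_scal; apply: lfun_comp hf (lin_comp (lin_mulr q.1) lin_S).
  exact: (D_lin (bil_scal (lfun_comp hf (lin_mull (S x))) lin_id)).
pose C x y z := \sum_(q <- D Lt) f (S x * (y * q.1)) *: (z * q.2).
have hC : tril C.
  split; [|split].
  - move=> y z; apply: lin_sumf => q; apply: lin_scal.
    exact: lfun_comp hf (lin_comp (lin_mulr _) lin_S).
  - move=> x z; apply: lin_sumf => q; apply: lin_scal.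
    exact: lfun_comp hf (lin_comp (lin_mull _) (lin_mulr _)).
  - move=> x y; apply: lin_sumf => q; apply: lfun_scal_lin => //; exact: lin_mulr.
symmetry; transitivity (Bf b Lt) => //.
rewrite -(PR hab hBf).
transitivity (\sum_(p <- D a) \sum_(r <- D p.2) C p.1 r.1 r.2).
  apply: eq_bigr => p _; rewrite /Bf.
  rewrite (teq2_bil (cop_mul hh p.2 Lt) (bil_scal (lfun_comp hf (lin_mull (S p.1))) lin_id)).
  by rewrite (sum_tmul (fun u v => f (S p.1 * u) *: v)).
rewrite -(coas _ hC).
transitivity (\sum_(p <- D a) \sum_(q <- D Lt) (e p.1 * f q.1) *: (p.2 * q.2)).
  apply: eq_bigr => p _; rewrite /C exchange_big /=; apply: eq_bigr => q _.
  rewrite -scaler_suml -(lfun_sum hf).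
  under eq_bigr do rewrite mulrA.
  by rewrite -mulr_suml (ant_l hh) -scalerAl mul1r (lfunZ hf).
rewrite exchange_big /=; apply: eq_bigr => q _.
rewrite -{2}(counit_l hh a) mulr_suml scaler_sumr; apply: eq_bigr => p _.
by rewrite -scalerAl scalerA mulrC.
Qed.


Lemma main_teq a b : pi_rel D Lt a b ->
  teq2 [seq (p.1, a * p.2) | p <- D Lt] [seq (S b * p.1, p.2) | p <- D Lt].
Proof. by move=> hab f hf; rewrite /slice_l !big_map /=; apply: main_id. Qed.

Lemma K_id a b f : pi_rel D Lt a b -> lfun f ->
  S b * slice_r f (D Lt) = slice_r (fun x => f (a * x)) (D Lt).
Proof.
move=> hab hf.
have hB : bil (fun x y => f y *: x).
  by split=> [y|x]; [exact: (lfun_scal_lin hf _ lin_id) | exact: lin_scal].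
have := teq2_bil (main_teq hab) hB; rewrite /slice_r !big_map /= => ->.
by rewrite mulr_sumr; apply: eq_bigr => p _; rewrite scalerAr.
Qed.

Lemma left_ideal a b f : pi_rel D Lt a b -> lfun f ->
  a * slice_l f (D Lt) = slice_l (fun x => f (S b * x)) (D Lt).
Proof.
move=> hab hf; rewrite /slice_l mulr_sumr -(main_id hab hf).
by apply: eq_bigr => p _; rewrite scalerAr.
Qed.


Lemma V_in_A L f : pi_rel D Lt Lt L -> lfun f ->
  pi_rel D Lt (slice_l f (D Lt)) (slice_l f (D L)).
Proof.
move=> hL hf; apply: pi_relI => g hg.
have hFg := D_lin (bil_scal hg (lin_mulr Lt)).
rewrite /slice_l (lin_sumZ hFg) /=.
pose C x u w := f x *: (g u *: (w * Lt)).
have hC : tril C.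
  split; [|split].
  - by move=> u w; apply: lin_scal.
  - by move=> x w; apply: lin_cscal; apply: lin_scal.
  - by move=> x u; apply: lin_cscal; apply: lin_cscal; apply: lin_mulr.
transitivity (\sum_(q <- D Lt) \sum_(p <- D q.2) C q.1 p.1 p.2).
  by apply: eq_bigr => q _; rewrite scaler_sumr.
rewrite -(coas _ hC).
pose Bfg x (y : H) := \sum_(r <- D x) (f r.1 * g r.2) *: y.
have hB : bil Bfg.
  split=> [y|x].
    apply: (D_lin (G := fun u v => (f u * g v) *: y)); split=> [v|u].
      by apply: lin_scal; apply: lfun_mulr.
    by move=> c z w; rewrite (hg c z w) mulrDr !scalerDl mulrCA scalerA.
  by apply: lin_sumf => r; apply: lin_cscal; exact: lin_id.
transitivity (\sum_(q <- D Lt) Bfg q.1 (q.2 * Lt)).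
  apply: eq_bigr => q _; rewrite /Bfg; apply: eq_bigr => r _.
  by rewrite /C scalerA.
rewrite (PR hL hB) /Bfg -scaler_suml (lfun_sum hg); congr (_ *: _).
by apply: eq_bigr => r _; rewrite (lfunZ hg) mulrC.
Qed.

Lemma faithful a b : pi_rel D Lt a b ->
  (forall f, lfun f -> a * slice_l f (D Lt) = 0) -> a = 0.
Proof.
move=> hab hV.
pose y := S b.
have hy g : lfun g -> \sum_(p <- D Lt) g (y * p.1) *: p.2 = 0.
  move=> hg; have := hV g hg; rewrite (left_ideal hab hg) /slice_l.
  exact.
have y0 : y = 0.
  apply: (sep_scal Ltn0) => f hf; rewrite (lfun0 hf) scale0r.
  have ht : teq2 [seq (y * p.1, p.2) | p <- D Lt] [::].
    by move=> g hg; rewrite /slice_l big_nil big_map /= hy.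
  pose B u v := \sum_(q <- D v) f (u * S q.1) *: q.2.
  have hB : bil B.
    split=> [v|u].
      by apply: lin_sumf => q; apply: lin_scal; apply: lfun_comp hf (lin_mulr _).
    exact: (D_lin (bil_scal (lfun_comp hf (lin_comp (lin_mull u) lin_S)) lin_id)).
  have := teq2_bil ht hB; rewrite big_nil big_map /= /B => e0.
  pose C x u (w : H) := f (y * x * S u) *: w.
  have hC : tril C.
    split; [|split].
    - move=> u w; apply: lin_scal; apply: (lfun_comp (F := fun x => y * x * S u) hf).
      exact: (lin_comp (lin_mulr _) (lin_mull y)).
    - move=> x w; apply: lin_scal; apply: (lfun_comp (F := fun u => y * x * S u) hf).
      exact: (lin_comp (lin_mull _) lin_S).
    - by move=> x u; apply: lin_cscal; exact: lin_id.
  have := coas Lt hC; rewrite /C => ec.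
  apply: (etrans _ (etrans ec e0)); symmetry.
  transitivity (\sum_(p <- D Lt) (e p.1 * f y) *: p.2).
    apply: eq_bigr => p _.
    under eq_bigr do rewrite -mulrA.
    rewrite -scaler_suml -(lfun_sum hf) -mulr_sumr (ant_r hh).
    by rewrite -scalerAr mulr1 (lfunZ hf).
  rewrite -{2}(counit_l hh Lt) scaler_sumr; apply: eq_bigr => p _.
  by rewrite scalerA mulrC.
have b0 : b = 0.
  have [Si SK KS] := ant_bij hh.
  by apply: (can_inj SK); rewrite -/y y0 (lin0 lin_S).
apply: (sep_scal Ltn0) => f hf; rewrite (lfun0 hf) scale0r.
pose B x y := \sum_(q <- D x) f q.1 *: (S q.2 * y).
have hB : bil B.
  split=> [y'|x].
    exact: (D_lin (bil_scal hf (lin_comp (lin_mulr y') lin_S))).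
  by apply: lin_sumf => q; apply: lfun_scal_lin => //; exact: lin_mull.
have := PR hab hB; rewrite b0 (lin0 (hB.1 Lt)) /B.
pose C x u w := f x *: (S u * (w * Lt)).
have hC : tril C.
  split; [|split].
  - by move=> u w; apply: lin_scal.
  - move=> x w; apply: lfun_scal_lin => //.
    exact: (lin_comp (lin_mulr _) lin_S).
  - move=> x u; apply: lfun_scal_lin => //.
    exact: (lin_comp (lin_mull _) (lin_mulr Lt)).
rewrite (coas a hC) /C => e1.
apply: (etrans _ e1); symmetry.
transitivity (\sum_(p <- D a) (e p.2 * f p.1) *: Lt).
  apply: eq_bigr => p _.
  under eq_bigr do rewrite mulrA.
  rewrite -scaler_sumr -mulr_suml (ant_l hh) -scalerAl mul1r scalerA mulrC //.
rewrite -scaler_suml; congr (_ *: _).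
rewrite -[in RHS](counit_r hh a) (lfun_sum hf); apply: eq_bigr => p _.
by rewrite (lfunZ hf).
Qed.


Lemma allz_map (es : seq ((H -> k) * H)) a v :
  allz [seq (fun x => e.1 (x * v)) | e <- es] a -> \sum_(e <- es) e.1 (a * v) *: e.2 = 0.
Proof.
elim: es => [|e0 es IH] /=; first by rewrite big_nil.
by move=> [h0 /IH h]; rewrite big_cons h h0 scale0r addr0.
Qed.

Lemma allf_map (es : seq ((H -> k) * H)) v :
  all_lfun es -> allf [seq (fun x => e.1 (x * v)) | e <- es].
Proof.
elim: es => [|e0 es IH] //= [h0 h]; split; last exact: IH.
exact: (lfun_comp h0 (lin_mulr v)).
Qed.

Lemma A_fin : fin_dim (Acoid D Lt).
Proof.
have [ds [hds hx]] := decomp [seq p.1 | p <- D Lt].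
have [es [hes hy]] := decomp [seq p.2 | p <- D Lt].
pose vd (d : (H -> k) * H) := slice_l d.1 (D Lt).
have Vsp f : lfun f -> slice_l f (D Lt) = \sum_(d <- ds) f d.2 *: vd d.
  move=> hf; rewrite /vd /slice_l.
  transitivity (\sum_(q <- D Lt) \sum_(d <- ds) (d.1 q.1 * f d.2) *: q.2).
    rewrite big_seq_cond [RHS]big_seq_cond; apply: eq_bigr => q /andP [qD _].
    rewrite {1}(hx q.1) ?(lfun_sum hf) ?scaler_suml; last by apply/mapP; exists q.
    by apply: eq_bigr => d _; rewrite (lfunZ hf).
  rewrite exchange_big /=; apply: eq_bigr => d _; rewrite scaler_sumr.
  by apply: eq_bigr => q _; rewrite scalerA mulrC.
have Vco f : lfun f -> slice_l f (D Lt) = \sum_(e <- es) e.1 (slice_l f (D Lt)) *: e.2.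
  move=> hf.
  transitivity (\sum_(q <- D Lt) f q.1 *: \sum_(e <- es) e.1 q.2 *: e.2).
    rewrite /slice_l big_seq_cond [RHS]big_seq_cond; apply: eq_bigr => q /andP [qD _].
    by rewrite -(hy q.2) //; apply/mapP; exists q.
  under eq_bigr do rewrite scaler_sumr.
  rewrite exchange_big /=; apply: eq_sum_all => // ee he.
  rewrite /slice_l (lfun_sum he) scaler_suml; apply: eq_bigr => q _ /=.
  by rewrite (lfunZ he) scalerA.
pose psi := foldr (fun d acc => [seq (fun x => e.1 (x * vd d)) | e <- es] ++ acc) [::] ds.
apply: (findim_inj (ps := psi)).
- rewrite /psi; clear psi; elim: ds {hx Vsp hds} => //= d ds IH.
  by apply: allf_cat => //; apply: allf_map.
- move=> c x y [b hb] [b' hb']; exists (c *: b + b'); exact: A_lin.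
move=> a [b hab] za; apply: (faithful hab) => f hf.
rewrite Vsp // mulr_sumr.
rewrite /psi in za; clear psi.
elim: ds hds {hx Vsp} za => [|d ds IH] /=; first by rewrite big_nil.
move=> [hd hds] /allz_cat [z1 z2]; rewrite big_cons IH // addr0.
rewrite -scalerAr.
have -> : a * vd d = 0.
  rewrite /vd (left_ideal hab hd) Vco; last exact: (lfun_comp hd (lin_mull _)).
  by rewrite -(left_ideal hab hd); apply: allz_map.
by rewrite scaler0.
Qed.


Variable L : H.
Hypothesis hLt : pi_rel D Lt Lt L.

Lemma S1 : S 1 = 1.
Proof.
have hB : bil (fun x y => S x * y).
  split=> [y|x]; [exact: (lin_comp (lin_mulr y) lin_S) | exact: lin_mull].
have := ant_l hh 1; rewrite (teq2_bil (cop_one hh) hB) big_seq1 /= (eps_one hh) scale1r.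
by rewrite mulr1.
Qed.

Lemma gU g nu : lfun g -> lfun nu -> g (Uslice D Lt nu) = nu (slice_l g (D Lt)).
Proof.
move=> hg hnu; rewrite /Uslice /slice_r /slice_l (lfun_sum hg) (lfun_sum hnu).
by apply: eq_bigr => p _; rewrite (lfunZ hg) (lfunZ hnu) mulrC.
Qed.

Lemma main_sec : let A := Acoid D Lt in
  let pi := piA D Lt in
  let V := Vl D Lt in
  let W := Vr D Lt in
  (forall a, A a ->
     teq2 [seq (p.1, a * p.2) | p <- D Lt] [seq (S (pi a) * p.1, p.2) | p <- D Lt]) /\
  ((forall v, V v -> A v) /\
   (forall a v, A a -> V v -> V (a * v)) /\
   (forall a, A a -> (forall v, V v -> a * v = 0) -> a = 0)) /\
  fin_dim A /\
  ((forall a x, A a -> W x -> W (S (pi a) * x)) /\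
   (forall x, W x -> S (pi 1) * x = x) /\
   (forall a b x, A a -> A b -> W x ->
      S (pi b) * (S (pi a) * x) = S (pi (a * b)) * x) /\
   (forall c a b x, A a -> A b -> W x ->
      S (pi (c *: a + b)) * x = c *: (S (pi a) * x) + S (pi b) * x)) /\
  (* (4) U : V' -> W is an isomorphism of right A-modules;
     elements of V' are represented by functionals on H, up to agreement on V *)
  ((forall nu mu, lfun nu -> lfun mu ->
      (forall v, V v -> nu v = mu v) -> Uslice D Lt nu = Uslice D Lt mu) /\
   (forall nu mu, lfun nu -> lfun mu ->
      Uslice D Lt nu = Uslice D Lt mu -> forall v, V v -> nu v = mu v) /\
   (forall nu, lfun nu -> W (Uslice D Lt nu)) /\
   (forall x, W x -> exists nu, lfun nu /\ Uslice D Lt nu = x) /\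
   (forall c nu mu, lfun nu -> lfun mu ->
      Uslice D Lt (fun x => c * nu x + mu x) = c *: Uslice D Lt nu + Uslice D Lt mu) /\
   (forall a nu, A a -> lfun nu ->
      Uslice D Lt (fun x => nu (a * x)) = S (pi a) * Uslice D Lt nu)) /\
  (nondegenerate_int D Lt <-> (forall x, V x <-> A x)).
Proof.
move=> A pi V W.
have piP a : A a -> pi_rel D Lt a (pi a) by move=> ha; apply: piA_spec.
have pi1 : pi 1 = 1 by apply: piA_eq; apply: A_one.
have Amul a b : A a -> A b -> A (a * b).
  by move=> ha hb; exists (pi a * pi b); apply: A_mul; apply: piP.
have K a f : A a -> lfun f -> S (pi a) * slice_r f (D Lt) = slice_r (fun x => f (a * x)) (D Lt).
  by move=> ha hf; apply: K_id => //; apply: piP.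
split; first by move=> a ha; apply: main_teq; apply: piP.
split.
  split; first by move=> _ [f [hf ->]]; exists (slice_l f (D L)); apply: V_in_A.
  split.
    move=> a _ [b hab] [f [hf ->]]; exists (fun x => f (S b * x)); split.
      exact: (lfun_comp hf (lin_mull _)).
    exact: left_ideal.
  move=> a [b hab] hz; apply: (faithful hab) => f hf; apply: hz.
  by exists f.
split; first exact: A_fin.
split.
  split; first by move=> a _ ha [f [hf ->]]; exists (fun x => f (a * x)); rewrite K //;
    split=> //; exact: (lfun_comp hf (lin_mull _)).
  split; first by move=> x _; rewrite pi1 S1 mul1r.
  split.
    move=> a b _ ha hb [f [hf ->]].
    rewrite K // K //; last exact: (lfun_comp hf (lin_mull _)).
    rewrite K //; last exact: Amul.
    by rewrite /slice_r; apply: eq_bigr => p _; rewrite mulrA.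
  move=> c a b _ ha hb [f [hf ->]].
  rewrite K //; last by exists (c *: pi a + pi b); apply: A_lin; apply: piP.
  rewrite !K // /slice_r scaler_sumr -big_split /=; apply: eq_bigr => p _.
  by rewrite mulrDl -scalerAl hf scalerDl scalerA.
split.
  split.
    move=> nu mu hnu hmu hag; apply: sep_eq => g hg.
    by rewrite !gU // hag //; exists g.
  split.
    move=> nu mu hnu hmu hU _ [g [hg ->]].
    by rewrite -!gU // hU.
  split; first by move=> nu hnu; exists nu.
  split; first by move=> _ [nu [hnu ->]]; exists nu.
  split.
    move=> c nu mu hnu hmu; rewrite /Uslice /slice_r scaler_sumr -big_split /=.
    by apply: eq_bigr => p _; rewrite scalerDl scalerA.
  move=> a nu ha hnu; rewrite /Uslice K //.
split.
  move=> hnd x; split; first by move=> [f [hf ->]]; exists (slice_l f (D L)); apply: V_in_A.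
  move=> [b hab]; case: hnd => [f [hf e1]].
  rewrite -[x]mulr1 e1 (left_ideal hab hf); exists (fun y => f (S b * y)); split=> //.
  exact: (lfun_comp hf (lin_mull _)).
move=> hVA; apply/hVA; exists 1; exact: A_one.
Qed.

End Hopf2.

Theorem mainTheorem3 (k : fieldType) (H : algType k)
  (D : H -> seq (H * H)) (e : H -> k) (S : H -> H) (L Lt : H) :
  is_hopf D e S -> integral_type D L -> L_integral_type D L Lt ->
  let A := Acoid D Lt in
  let pi := piA D Lt in
  let V := Vl D Lt in
  let W := Vr D Lt in
  (* (1 (x) a) Delta(Lt) = (S(pi a) (x) 1) Delta(Lt) *)
  (forall a, A a ->
     teq2 [seq (p.1, a * p.2) | p <- D Lt] [seq (S (pi a) * p.1, p.2) | p <- D Lt]) /\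
  (* (1) *)
  ((forall v, V v -> A v) /\
   (forall a v, A a -> V v -> V (a * v)) /\
   (forall a, A a -> (forall v, V v -> a * v = 0) -> a = 0)) /\
  (* (2) *)
  fin_dim A /\
  (* (3) right module structure x . a := S(pi a) x on W *)
  ((forall a x, A a -> W x -> W (S (pi a) * x)) /\
   (forall x, W x -> S (pi 1) * x = x) /\
   (forall a b x, A a -> A b -> W x ->
      S (pi b) * (S (pi a) * x) = S (pi (a * b)) * x) /\
   (forall c a b x, A a -> A b -> W x ->
      S (pi (c *: a + b)) * x = c *: (S (pi a) * x) + S (pi b) * x)) /\
  (* (4) U : V' -> W is an isomorphism of right A-modules;
     elements of V' are represented by functionals on H, up to agreement on V *)
  ((forall nu mu, lfun nu -> lfun mu ->
      (forall v, V v -> nu v = mu v) -> Uslice D Lt nu = Uslice D Lt mu) /\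
   (forall nu mu, lfun nu -> lfun mu ->
      Uslice D Lt nu = Uslice D Lt mu -> forall v, V v -> nu v = mu v) /\
   (forall nu, lfun nu -> W (Uslice D Lt nu)) /\
   (forall x, W x -> exists nu, lfun nu /\ Uslice D Lt nu = x) /\
   (forall c nu mu, lfun nu -> lfun mu ->
      Uslice D Lt (fun x => c * nu x + mu x) = c *: Uslice D Lt nu + Uslice D Lt mu) /\
   (forall a nu, A a -> lfun nu ->
      Uslice D Lt (fun x => nu (a * x)) = S (pi a) * Uslice D Lt nu)) /\
  (* (5) *)
  (nondegenerate_int D Lt <-> (forall x, V x <-> A x)).
Proof.
move=> hh _ [Ltn0 hLt].
exact: (main_sec hh Ltn0 hLt).
Qed.
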